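(* For even $m\ge 10$, let $T_m:=K_1\vee\bigl(K_4\cup (m-10)K_1\bigr)$, i.e. the graph consisting of a vertex $u^*$ adjacent to all vertices of a disjoint union of a $K_4$ and $m-10$ isolated vertices (so $T_m$ has $m$ edges). Then $T_m$ is $H(4,3)$-free, $\rho(T_m)>\rho'(m)$ for $m\in\{10,12,14,16\}$, and $\rho(T_m)<\rho'(m)$ for every even $m\ge 18$.
   Context: All graphs are finite, simple and undirected; $\rho(G)$ denotes the adjacency spectral radius of $G$. $H(4,3)$ is the graph obtained from a $4$-cycle and a triangle by identifying one vertex of the $4$-cycle with one vertex of the triangle; $H(4,3)$-free means containing no subgraph isomorphic to $H(4,3)$. $G_1\vee G_2$ denotes the join (disjoint union plus all edges between the two parts), and $\cup$ denotes disjoint union. For even $m$, $\rho'(m)$ is the largest real root of $p_m(x)=x^4-mx^2-(m-2)x+\frac{m}{2}-1$. *)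

(* Defs.v *)
From HB Require Import structures.
From mathcomp Require Import all_boot all_order all_algebra.
From mathcomp Require Import classical_sets reals.
Set Implicit Arguments. Unset Strict Implicit. Unset Printing Implicit Defensive.
Import Order.TTheory GRing.Theory Num.Theory.
Local Open Scope ring_scope.
Local Open Scope classical_set_scope.

Definition simple_graph (V : finType) (e : rel V) : Prop :=
  (forall x y, e x y = e y x) /\ (forall x, e x x = false).

(* H(4,3): 4-cycle 0-1-2-3-0 and triangle 0-4-5-0, sharing vertex 0. *)
Definition H43_edges : seq (nat * nat) :=
  [:: (0,1); (1,2); (2,3); (3,0); (0,4); (4,5); (5,0)]%N.

Definition H43_adj : rel 'I_6 :=
  fun i j => ((nat_of_ord i, nat_of_ord j) \in H43_edges)
          || ((nat_of_ord j, nat_of_ord i) \in H43_edges).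

Definition contains_subgraph (VH V : finType) (eH : rel VH) (e : rel V) : Prop :=
  exists f : VH -> V, injective f /\ forall x y, eH x y -> e (f x) (f y).

Definition H43_free (V : finType) (e : rel V) : Prop :=
  ~ contains_subgraph H43_adj e.

(* Adjacency matrix and adjacency spectral radius (max modulus of an
   eigenvalue; adjacency matrices are real symmetric so all eigenvalues
   are real). *)
Definition adj_matrix (R : nzRingType) (n : nat) (e : rel 'I_n) : 'M[R]_n :=
  \matrix_(i, j) (e i j)%:R.

Definition spectral_radius (R : realType) (n : nat) (e : rel 'I_n) : R :=
  sup [set `|a| | a in [set a : R | eigenvalue (adj_matrix R e) a]].

(* T_m = K_1 v (K_4 u (m-10) K_1) on vertex set 'I_(m-5): vertex 0 is u*,
   vertices 1..4 form the K_4, vertices 5..m-6 are the isolated ones. *)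
Definition T_adj (m : nat) : rel 'I_(m - 5) :=
  fun i j => (i != j) &&
    [|| nat_of_ord i == 0%N, nat_of_ord j == 0%N
      | (nat_of_ord i <= 4)%N && (nat_of_ord j <= 4)%N].

Definition p_poly (R : realType) (m : nat) : {poly R} :=
  'X^4 - (m%:R : R) *: 'X^2 - ((m%:R : R) - 2) *: 'X + ((m%:R : R) / 2 - 1)%:P.

Definition rho' (R : realType) (m : nat) : R :=
  sup [set x : R | root (p_poly R m) x].
Arguments T_adj m : clear implicits.

(* Main.v *)
Require Import Defs.
From HB Require Import structures.
From mathcomp Require Import all_boot all_order all_algebra.
From mathcomp Require Import classical_sets reals.
From mathcomp Require Import zify ring lra.
Set Implicit Arguments. Unset Strict Implicit. Unset Printing Implicit Defensive.
Import Order.TTheory GRing.Theory Num.Theory.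


Lemma card_natpred n (P : pred nat) :
  #|[pred i : 'I_n | P (nat_of_ord i)]| = count P (iota 0 n).
Proof.
rewrite cardE /enum_mem size_filter -val_enum_ord count_map.
by rewrite enumT; apply: eq_count => i.
Qed.

Lemma cards_T m : (10 <= m)%N ->
  [/\ #|[pred i : 'I_(m-5) | (nat_of_ord i <= 4) && (nat_of_ord i == 0)]| = 1%N,
      #|[pred i : 'I_(m-5) | (nat_of_ord i <= 4) && (nat_of_ord i != 0)]| = 4%N
    & #|[pred i : 'I_(m-5) | ~~ (nat_of_ord i <= 4)]| = (m - 10)%N].
Proof.
move=> hm.
have -> : (m - 5 = 5 + (m - 10))%N by lia.
rewrite (card_natpred _ (fun i => (i <= 4) && (i == 0))%N).
rewrite (card_natpred _ (fun i => (i <= 4) && (i != 0))%N).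
rewrite (card_natpred _ (fun i => ~~ (i <= 4))%N).
rewrite iotaD !count_cat /=.
have h0 : forall P : pred nat, (forall i, 5 <= i -> ~~ P i)%N -> count P (iota 5 (m - 10)) = 0%N.
  move=> P hP; apply/eqP; rewrite -leqn0 leqNgt -has_count; apply/hasPn => i.
  by rewrite mem_iota => /andP[h _]; apply: hP.
split.
- by rewrite h0 // => i hi; apply/negP => /andP[]; lia.
- by rewrite h0 // => i hi; apply/negP => /andP[]; lia.
rewrite /= add0n addn0 (@eq_in_count _ (fun i => ~~ (i <= 4))%N predT) ?count_predT ?size_iota //.
by move=> i; rewrite mem_iota /=; lia.
Qed.

Local Open Scope ring_scope.
Lemma sum_classes (R : comNzRingType) m (g : 'I_(m-5) -> R) x y z :
  (10 <= m)%N -> (forall i : 'I_(m-5), nat_of_ord i = 0%N -> g i = x) ->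
  (forall i : 'I_(m-5), nat_of_ord i != 0%N -> (i <= 4)%N -> g i = y) ->
  (forall i : 'I_(m-5), (4 < i)%N -> g i = z) ->
  \sum_(i | (nat_of_ord i <= 4)%N) g i = x + 4%:R * y /\
  \sum_i g i = x + 4%:R * y + (m-10)%:R * z.
Proof.
move=> hm hx hy hz; case: (cards_T hm) => c1 c2 c3.
have e1 : \sum_(i | (nat_of_ord i <= 4)%N) g i = x + 4%:R * y.
  rewrite (bigID (fun i : 'I_ _ => nat_of_ord i == 0%N)) /=.
  rewrite (eq_bigr (fun _ => x)); last by move=> i /andP[_ /eqP]; apply: hx.
  rewrite [X in _ + X](eq_bigr (fun _ => y)); last by move=> i /andP[h1 h2]; apply: hy.
  by rewrite !sumr_const c1 c2 mulr_natl.
split => //.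
rewrite (bigID (fun i : 'I_ _ => nat_of_ord i <= 4)%N) /= e1.
rewrite (eq_bigr (fun _ => z)); last by move=> i; rewrite -ltnNge; apply: hz.
rewrite sumr_const. have -> : #|fun i : 'I_(m-5) => ~~ (i <= 4)%N| = (m-10)%N by exact: c3.
by rewrite !mulr_natl.
Qed.

Lemma sum_ind (R : comNzRingType) n (v : 'I_n -> R) (P : pred 'I_n) :
  \sum_i v i * (P i)%:R = \sum_(i | P i) v i.
Proof.
by rewrite [RHS]big_mkcond; apply: eq_bigr => i _; case: (P i); rewrite ?mulr1 ?mulr0.
Qed.

Lemma mulT (R : comNzRingType) m (v : 'rV[R]_(m-5)) (j : 'I_(m-5)) :
 (v *m adj_matrix R (T_adj m)) 0 j =
 if nat_of_ord j == 0%N then \sum_i v 0 i - v 0 j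
 else if (nat_of_ord j <= 4)%N then \sum_(i | (nat_of_ord i <= 4)%N) v 0 i - v 0 j
 else \sum_(i | nat_of_ord i == 0%N) v 0 i.
Proof.
rewrite mxE; under eq_bigr do rewrite mxE.
case: ifP => j0.
  rewrite (eq_bigr (fun i => v 0 i * (i != j)%:R)); last first.
    by move=> i _; rewrite /T_adj j0 /= orbT andbT.
  by rewrite sum_ind [X in _ = X - _](bigD1 j) //= addrC addrK.
case: ifP => j4.
  rewrite (eq_bigr (fun i => v 0 i * ((nat_of_ord i <= 4)%N && (i != j))%:R)); last first.
    move=> i _; rewrite /T_adj j0 j4 /= andbT.
    by case: (eqVneq (nat_of_ord i) 0%N) => [->|ne] //=; rewrite andbC.
  by rewrite sum_ind [X in _ = X - _](bigD1 j) //= addrC addrK.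
rewrite (eq_bigr (fun i => v 0 i * (nat_of_ord i == 0%N)%:R)); last first.
  move=> i _; rewrite /T_adj j0 j4 /= andbF orbF.
  case: (eqVneq (nat_of_ord i) 0%N) => [ie|ne] /=; last by rewrite andbF.
  have -> : i != j by apply/eqP => e; move: j0; rewrite -e ie.
  by [].
by rewrite sum_ind.
Qed.

Definition cub (R : realType) (k a : R) := a ^+ 3 - 3 * a ^+ 2 - (4 + k) * a + 3 * k.

Lemma eig_char (R : realType) m (a : R) : (10 <= m)%N ->
  eigenvalue (adj_matrix R (T_adj m)) a ->
  a = 0 \/ a = -1 \/ cub (m-10)%:R a = 0.
Proof.
move=> hm /eigenvalueP [v hv vn0].
have h0 : (0 < m - 5)%N by lia.
pose i0 : 'I_(m-5) := Ordinal h0.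
set k : R := (m-10)%:R.
case: (eqVneq a 0) => [->|a0]; first by left.
case: (eqVneq a (-1)) => [->|a1]; first by right; left.
right; right.
have a1' : a + 1 != 0 by rewrite addr_eq0.
have E j : (v *m adj_matrix R (T_adj m)) 0 j = a * v 0 j by rewrite hv mxE.
set C := \sum_(i | (nat_of_ord i <= 4)%N) v 0 i.
set Tt := \sum_i v 0 i.
set x := v 0 i0.
have hx : forall i : 'I_(m-5), nat_of_ord i = 0%N -> v 0 i = x.
  by move=> i hi; congr (v 0 _); apply: val_inj.
have E0 : Tt - x = a * x by move: (E i0); rewrite mulT.
have hy : forall i : 'I_(m-5), nat_of_ord i != 0%N -> (i <= 4)%N -> v 0 i = C / (a + 1).
  move=> i ne le; move: (E i); rewrite mulT (negbTE ne) le -/C => e.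
  apply: (mulIf a1'); rewrite divfK // -(subrK (v 0 i) C) e; ring.
have hz : forall i : 'I_(m-5), (4 < i)%N -> v 0 i = x / a.
  move=> i lt; move: (E i); rewrite mulT.
  have -> : (nat_of_ord i == 0%N) = false by apply/eqP; lia.
  have -> : (nat_of_ord i <= 4)%N = false by lia.
  rewrite (big_pred1 i0); last by move=> j; rewrite /= -val_eqE.
  by move=> e; rewrite -/x in e; rewrite e; field.
have [eC eT] := sum_classes hm hx hy hz.
rewrite -/C -/Tt -/k in eC eT.
have h1 : C * (a + 1) - x * (a + 1) - 4 * C = 0.
  by rewrite {1}eC; field.
rewrite -eC in eT; rewrite eT in E0.
have h2 : a * C + k * x - a * x - a ^+ 2 * x = 0.
  have -> : a * C + k * x - a * x - a ^+ 2 * x = a * ((C + k * (x / a) - x) - a * x) by field.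
  by rewrite E0 subrr mulr0.
case: (eqVneq x 0) => [x0|xn0]; last first.
  apply/eqP; suff : x * cub k a == 0 by rewrite mulf_eq0 (negbTE xn0).
  apply/eqP; rewrite /cub.
  have -> : x * (a ^+ 3 - 3 * a ^+ 2 - (4 + k) * a + 3 * k) =
     - (a - 3) * (a * C + k * x - a * x - a ^+ 2 * x) + a * (C * (a + 1) - x * (a + 1) - 4 * C) by ring.
  by rewrite h1 h2 !mulr0 addr0.
exfalso; move/eqP: vn0; apply.
have hC : C = 0.
  by move: E0; rewrite x0 !(mul0r, mulr0, subr0, addr0).
apply/matrixP => i j; rewrite mxE (ord1 i).
case: (eqVneq (nat_of_ord j) 0%N) => [j0|jn0]; first by rewrite (hx _ j0) x0.
case: (leqP (nat_of_ord j) 4) => [j4|j4].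
  by rewrite (hy _ jn0 j4) hC mul0r.
by rewrite (hz _ j4) x0 mul0r.
Qed.

Lemma eig_cub (R : realType) m (r : R) : (10 <= m)%N -> r != 0 -> r != 3 ->
  cub (m-10)%:R r = 0 -> eigenvalue (adj_matrix R (T_adj m)) r.
Proof.
move=> hm r0 r3 hc.
have h0 : (0 < m - 5)%N by lia.
pose i0 : 'I_(m-5) := Ordinal h0.
have r3' : r - 3 != 0 by rewrite subr_eq0.
apply/eigenvalueP.
set v : 'rV[R]_(m-5) := \row_j (if nat_of_ord j == 0%N then 1
   else if (nat_of_ord j <= 4)%N then (r - 3)^-1 else r^-1).
have [eC eT] : \sum_(i | (nat_of_ord i <= 4)%N) v 0 i = 1 + 4%:R * (r - 3)^-1 /\
  \sum_i v 0 i = 1 + 4%:R * (r - 3)^-1 + (m-10)%:R * r^-1.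
  apply: sum_classes => // i.
  - by move=> hi; rewrite mxE hi.
  - by move=> hi hl; rewrite mxE (negbTE hi) hl.
  - move=> hl; rewrite mxE; have -> : (nat_of_ord i == 0%N) = false by apply/eqP; lia.
    by have -> : (nat_of_ord i <= 4)%N = false by lia.
exists v; last first.
  apply/negP => /eqP/matrixP/(_ 0 i0); rewrite !mxE /= => /eqP; by rewrite oner_eq0.
apply/matrixP => i j; rewrite (ord1 i) mulT [in RHS]mxE.
move: eC eT hc; rewrite /cub; set k : R := (m-10)%:R => eC eT hc.
case: ifP => j0.
  rewrite eT /v !mxE j0.
  apply/eqP; rewrite -subr_eq0; apply/eqP.
  have -> : 1 + 4%:R * (r - 3)^-1 + k * r^-1 - 1 - r * 1 =
     - (r ^+ 3 - 3 * r ^+ 2 - (4 + k) * r + 3 * k) / (r * (r - 3)).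
    by field; rewrite r3' r0.
  by rewrite hc oppr0 mul0r.
case: ifP => j4.
  by rewrite eC /v !mxE j0 j4; field.
rewrite (big_pred1 i0); last by move=> l; rewrite /= -val_eqE.
by rewrite /v !mxE j0 j4 /=; field.
Qed.

Lemma nbH (x : 'I_6) : exists y : 'I_6, exists z : 'I_6,
   [&& H43_adj x y, H43_adj x z & y != z].
Proof.
case: x => [[|[|[|[|[|[|x]]]]]] hx] //.
- by exists (@Ordinal 6 1 isT), (@Ordinal 6 3 isT).
- by exists (@Ordinal 6 0 isT), (@Ordinal 6 2 isT).
- by exists (@Ordinal 6 1 isT), (@Ordinal 6 3 isT).
- by exists (@Ordinal 6 0 isT), (@Ordinal 6 2 isT).
- by exists (@Ordinal 6 0 isT), (@Ordinal 6 5 isT).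
- by exists (@Ordinal 6 0 isT), (@Ordinal 6 4 isT).
Qed.

Lemma T_simple m : simple_graph (T_adj m).
Proof.
split => [x y|x]; last by rewrite /T_adj eqxx.
rewrite /T_adj eq_sym; congr andb.
by case: (nat_of_ord x == 0%N); case: (nat_of_ord y == 0%N); rewrite //= andbC.
Qed.

Lemma T_free m : (10 <= m)%N -> H43_free (T_adj m).
Proof.
move=> hm [f [finj fe]].
have pend i j : T_adj m i j -> (4 < nat_of_ord i)%N -> nat_of_ord j = 0%N.
  rewrite /T_adj => /andP[_] /or3P[/eqP|/eqP //|/andP[]]; lia.
have le4 x : (nat_of_ord (f x) <= 4)%N.
  have [y [z /and3P[hy hz yz]]] := nbH x.
  rewrite leqNgt; apply/negP => lt.
  have e1 := pend _ _ (fe _ _ hy) lt; have e2 := pend _ _ (fe _ _ hz) lt.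
  have : f y = f z by apply: val_inj; rewrite /= e1 e2.
  by move/finj/eqP; rewrite (negbTE yz).
pose g (x : 'I_6) : 'I_5 := inord (f x).
have ginj : injective g.
  move=> x y /(congr1 val); rewrite /g /= !inordK ?ltnS ?le4 // => e.
  by apply: finj; apply: val_inj.
by have := leq_card _ ginj; rewrite !card_ord.
Qed.

Local Open Scope ring_scope.

Lemma pE (R : realType) m x : (p_poly R m).[x] = x^+4 - m%:R * x^+2 - (m%:R - 2) * x + (m%:R / 2 - 1).
Proof. by rewrite /p_poly !hornerE. Qed.

Lemma num1 (R : realType) (s : R) : 173/50 <= s ->
  12 * s^+3 < (s^+2 - 3 * s + 18/5) * (2 * (18/5) * s^+2 + (18/5)^+2).
Proof.
move=> hs. set t := s - 173/50.
have ht : 0 <= t by rewrite /t subr_ge0.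
have -> : s = t + 173/50 by rewrite /t; ring.
nra.
Qed.

Lemma num2 (R : realType) (s : R) : 173/50 <= s ->
  (s^+2 + 18/5)^+4 - (s^+2 + 6) * s^+2 * (s^+2 + 18/5)^+2
   - (s^+2 + 4) * (s^+2 + 18/5) * s^+3 + (s^+2 / 2 + 2) * s^+4 < 0.
Proof.
move=> hs. set t := s - 173/50.
have ht : 0 <= t by rewrite /t subr_ge0.
have -> : s = t + 173/50 by rewrite /t; ring.
have h2 : 0 <= t^+2 by rewrite sqr_ge0.
have h3 : 0 <= t^+3 by rewrite exprn_ge0.
have h4 : 0 <= t^+4 by rewrite exprn_ge0.
have h5 : 0 <= t^+5 by rewrite exprn_ge0.
have h6 : 0 <= t^+6 by rewrite exprn_ge0.
have h7 : 0 <= t^+7 by rewrite exprn_ge0.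
lra.
Qed.

Lemma p_pos_big (R : realType) m (x : R) : (18 <= m)%N -> m%:R <= x -> 0 < (p_poly R m).[x].
Proof.
move=> hm hx; rewrite pE.
have hM : 18 <= m%:R :> R by rewrite (ler_nat R 18 m).
set M : R := m%:R in hM hx *.
have hx0 : 0 <= x by lra.
have h1 : M * x <= x * x by nra.
have h2 : 18 * x <= x^+2 by nra.
have h3 : M * x^+2 + M * x <= x^+4 - x^+2 by nra.
nra.
Qed.

Definition cubp (R : realType) (k : R) : {poly R} :=
  'X^3 - 3%:P * 'X^2 - (4 + k)%:P * 'X + (3 * k)%:P.

Lemma cubpE (R : realType) (k x : R) : (cubp k).[x] = cub k x.
Proof. by rewrite /cubp /cub !hornerE. Qed.

Lemma big_case (R : realType) m : (18 <= m)%N ->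
  spectral_radius R (T_adj m) < rho' R m.
Proof.
move=> hm; have hm10 : (10 <= m)%N by lia.
set k : R := (m-10)%:R.
have hk : 8 <= k by rewrite /k (ler_nat R 8 (m-10)); lia.
have hMk : m%:R = k + 10 :> R by rewrite /k -(natrD R (m-10) 10) subnK.
set s := Num.sqrt (k + 4).
have hs2 : s ^+ 2 = k + 4 by rewrite sqr_sqrtr //; lra.
have hs0 : 0 <= s by apply: sqrtr_ge0.
have kE : (m-10)%:R = k by [].
clearbody s k.
have hs : 173/50 <= s by nra.
have sn0 : s != 0 by apply/eqP => e; move: hs; rewrite e; lra.
set c := s + 18/5 / s.
have hsc : s < c by rewrite /c ltrDl divr_gt0 //; lra.
have hcub0 : 12 < (c - 3) * (c^+2 - s^+2).
  have -> : (c - 3) * (c^+2 - s^+2) =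
     (s^+2 - 3 * s + 18/5) * (2 * (18/5) * s^+2 + (18/5)^+2) / s^+3.
    by rewrite /c; field.
  rewrite ltr_pdivlMr ?exprn_gt0 ?num1 //; lra.
have cubE x : cub k x = (x - 3) * (x^+2 - s^+2) - 12.
  rewrite hs2 /cub; ring.
have hcub : forall x, c <= `|x| -> cub k x != 0.
  move=> x; rewrite cubE; case: (lerP 0 x) => hx.
    rewrite ger0_norm // => hcx.
    have e1 : c - 3 <= x - 3 by lra.
    have e2 : c^+2 - s^+2 <= x^+2 - s^+2 by rewrite lerD2r; nra.
    have : (c - 3) * (c^+2 - s^+2) <= (x - 3) * (x^+2 - s^+2).
      apply: ler_pM => //; nra.
    move=> h; apply/eqP; lra.
  rewrite ltr0_norm // => hcx.
  have e2 : 0 < x^+2 - s^+2 by nra.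
  have : (x - 3) * (x^+2 - s^+2) < 0 by nra.
  move=> h; apply/eqP; lra.
have hsr : spectral_radius R (T_adj m) <= c.
  apply: ge_sup.
    have [r /andP[r1 r2] rr] : exists2 r, s <= r <= c & root (cubp k) r.
      apply: poly_ivt; first lra.
      rewrite !cubpE !cubE subrr mulr0 add0r.
      apply/andP; split; lra.
    have rE : eigenvalue (adj_matrix R (T_adj m)) r.
      apply: eig_cub => //; first by apply/eqP => e; lra.
      - by apply/eqP => e; lra.
      - by move: rr; rewrite /root cubpE kE => /eqP.
    by exists `|r|, r.
  move=> y [a ha <-].
  case: (eig_char hm10 ha) => [->|[->|]]; last rewrite kE => hc.
  - rewrite normr0; lra.
  - rewrite normrN1; lra.
  - rewrite leNgt; apply/negP => lt.
    by move: (hcub a (ltW lt)); rewrite hc eqxx.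
have hpc : (p_poly R m).[c] < 0.
  rewrite pE hMk.
  have e : (s^+4) * (c^+4 - (k + 10) * c^+2 - (k + 10 - 2) * c + ((k + 10) / 2 - 1)) =
    (s^+2 + 18/5)^+4 - (s^+2 + 6) * s^+2 * (s^+2 + 18/5)^+2
     - (s^+2 + 4) * (s^+2 + 18/5) * s^+3 + (s^+2 / 2 + 2) * s^+4.
    have kS : k = s^+2 - 4 by rewrite hs2; ring.
    by rewrite kS /c; field; exact: sn0.
  have h4 : 0 < s^+4 by rewrite exprn_gt0 // lt_def sn0 hs0.
  by move: (num2 hs); rewrite -e pmulr_rlt0.
have hcM : c <= m%:R.
  rewrite hMk /c.
  have : 18/5 / s <= 2 by rewrite ler_pdivrMr; lra.
  nra.
have [z /andP[z1 z2] rz] : exists2 z, c <= z <= m%:R & root (p_poly R m) z.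
  apply: poly_ivt => //; apply/andP; split; first exact: ltW.
  exact/ltW/p_pos_big.
have zc : c < z.
  rewrite lt_def z1 andbT; apply/eqP => e.
  by move: rz; rewrite /root e (lt_eqF hpc).
have hz : z <= rho' R m.
  apply: ub_le_sup => //; exists m%:R => x /= rx; rewrite leNgt; apply/negP => lt.
  by move: rx; rewrite /root gt_eqF // p_pos_big // ltW.
exact: (lt_le_trans (le_lt_trans hsr zc) hz).
Qed.

Lemma small_gen (R : realType) m (c : R) : (10 <= m)%N -> (m <= 16)%N -> 3 < c ->
  cub (m-10)%:R c < 0 -> (forall x, c <= x -> 0 < (p_poly R m).[x]) ->
  rho' R m < spectral_radius R (T_adj m).
Proof.
move=> hm hm16 c3 hcc hp.
set k : R := (m-10)%:R.
have hk : 0 <= k <= 6.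
  by rewrite /k ler0n /= (ler_nat R (m-10) 6); lia.
have kE : (m-10)%:R = k by [].
clearbody k.
rewrite kE in hcc.
have c10 : c <= 10.
  rewrite leNgt; apply/negP => lt.
  move: hcc; rewrite /cub; nra.
have [r /andP[r1 r2] rr] : exists2 r, c <= r <= 10 & root (cubp k) r.
  apply: poly_ivt => //; rewrite !cubpE; apply/andP; split; first exact: ltW.
  rewrite /cub; nra.
have rc : c < r.
  rewrite lt_def r1 andbT; apply/eqP => e.
  by move: rr; rewrite /root e cubpE (lt_eqF hcc).
have rE : eigenvalue (adj_matrix R (T_adj m)) r.
  apply: eig_cub => //; first by apply/eqP => e; lra.
  - by apply/eqP => e; lra.
  - by move: rr; rewrite /root cubpE kE => /eqP.
have hsr : r <= spectral_radius R (T_adj m).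
  apply: ub_le_sup; last by exists r => //; rewrite ger0_norm //; lra.
  exists 10 => y [a ha <-].
  case: (eig_char hm ha) => [->|[->|]]; first (rewrite normr0; lra).
    rewrite normrN1; lra.
  rewrite kE => hc.
  rewrite leNgt; apply/negP => lt.
  move: hc; rewrite /cub; case: (lerP 0 a) => ha0.
    rewrite ger0_norm // in lt; nra.
  rewrite ltr0_norm // in lt; nra.
have hrho : rho' R m <= c.
  apply: ge_sup.
    have [z _ rz] : exists2 z, 1 <= z <= c & root (p_poly R m) z.
      apply: poly_ivt; first lra.
      apply/andP; split; last exact/ltW/hp.
      rewrite pE.
      have : 10 <= m%:R :> R by rewrite (ler_nat R 10 m).
      lra.
    by exists z.
  move=> x /= rx; rewrite leNgt; apply/negP => lt.
  by move: rx; rewrite /root gt_eqF // hp // ltW.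
exact: (le_lt_trans hrho (lt_le_trans rc hsr)).
Qed.

Lemma pos_gen (R : realType) (m : nat) (c x : R) :
  0 < c^+4 - m%:R * c^+2 - (m%:R - 2) * c + (m%:R / 2 - 1) ->
  0 <= 4 * c^+3 - 2 * m%:R * c - (m%:R - 2) -> 0 <= 6 * c^+2 - m%:R -> 0 <= c ->
  c <= x -> 0 < (p_poly R m).[x].
Proof.
move=> h0 h1 h2 hc hx; rewrite pE.
set M : R := m%:R in h0 h1 h2 *.
set t := x - c.
have ht : 0 <= t by rewrite /t subr_ge0.
have -> : x = t + c by rewrite /t; ring.
have e : (t + c)^+4 - M * (t + c)^+2 - (M - 2) * (t + c) + (M / 2 - 1) =
   t^+4 + 4 * c * t^+3 + (6 * c^+2 - M) * t^+2 + (4 * c^+3 - 2 * M * c - (M - 2)) * t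
   + (c^+4 - M * c^+2 - (M - 2) * c + (M / 2 - 1)) by ring.
rewrite e.
have h3 : 0 <= t^+3 by rewrite exprn_ge0.
have h4 : 0 <= t^+4 by rewrite exprn_ge0.
have h22 : 0 <= t^+2 by rewrite exprn_ge0.
have a1 : 0 <= 4 * c * t^+3 by rewrite !mulr_ge0 //.
have a2 : 0 <= (6 * c^+2 - M) * t^+2 by rewrite mulr_ge0.
have a3 : 0 <= (4 * c^+3 - 2 * M * c - (M - 2)) * t by rewrite mulr_ge0.
lra.
Qed.

Lemma small_case (R : realType) m : ~~ odd m -> (10 <= m)%N -> (m <= 16)%N ->
  rho' R m < spectral_radius R (T_adj m).
Proof.
move=> ho h10 h16.
have : m = 10%N \/ m = 12%N \/ m = 14%N \/ m = 16%N.
  have [j ej] : exists j, m = (j + 10)%N by exists (m - 10)%N; lia.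
  rewrite ej in ho h16 *.
  case: j {ej} ho h16 => [|[|[|[|[|[|[|j]]]]]]] //= ho h16; lia.
case=> [->|[->|[->|->]]].
- apply: (@small_gen R _ (7/2)) => //; first lra.
    rewrite /cub (_ : (10 - 10)%N = 0%N) //; lra.
  by move=> x; apply: pos_gen; lra.
- apply: (@small_gen R _ (4)) => //; first lra.
    rewrite /cub (_ : (12 - 10)%N = 2%N) //; lra.
  by move=> x; apply: pos_gen; lra.
- apply: (@small_gen R _ (41/10)) => //; first lra.
    rewrite /cub (_ : (14 - 10)%N = 4%N) //; lra.
  by move=> x; apply: pos_gen; lra.
- apply: (@small_gen R _ (869/200)) => //; first lra.
    rewrite /cub (_ : (16 - 10)%N = 6%N) //; lra.
  by move=> x; apply: pos_gen; lra.
Qed.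

Unset Implicit Arguments.
Theorem proposition1p2 (R : realType) (m : nat) :
  ~~ odd m -> (10 <= m)%N ->
  [/\ simple_graph (T_adj m),
      H43_free (T_adj m),
      ((m <= 16)%N -> rho' R m < spectral_radius R (T_adj m))
    & ((18 <= m)%N -> spectral_radius R (T_adj m) < rho' R m)].
Proof.
move=> ho hm; split.
- exact: T_simple.
- exact: T_free.
- by move=> h; apply: small_case.
- by move=> h; apply: big_case.
Qed.
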